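(* Let $p$ be a prime and let $a,b$ be positive integers. Let $T_a,T_b$ be the Chebyshev polynomials of the first kind of degrees $a,b$, viewed as self-maps of $\mathbb{F}_p$. A point $z\in\mathbb{F}_p$ is periodic for $T_a\circ T_b$ if and only if it is periodic for both $T_a$ and $T_b$ (not necessarily of the same period).
   Context: The $d$-th Chebyshev polynomial of the first kind $T_d\in\mathbb{Z}[z]$ is the monic degree-$d$ polynomial with $T_d(z+z^{-1})=z^d+z^{-d}$; they satisfy $T_a\circ T_b=T_b\circ T_a=T_{ab}$. A point $z$ is periodic for a map $f$ if $f^n(z)=z$ for some $n\ge1$. *)

(* Defs.v *)
From mathcomp Require Import all_boot all_order all_algebra.
Set Implicit Arguments. Unset Strict Implicit. Unset Printing Implicit Defensive.
Import GRing.Theory.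
Local Open Scope ring_scope.

(* Chebyshev polynomials of the first kind, monic normalization:
   T_0 = 2, T_1 = X, T_{n+2} = X * T_{n+1} - T_n, so that
   T_d(z + z^-1) = z^d + z^-d. *)
Fixpoint cheb_pair (n : nat) : {poly int} * {poly int} :=
  match n with
  | 0%N => (2%:P, 'X)
  | n'.+1 => let: (a, b) := cheb_pair n' in (b, 'X * b - a)
  end.

Definition chebT (d : nat) : {poly int} := (cheb_pair d).1.

Definition chebMap (R : nzRingType) (d : nat) (x : R) : R :=
  (map_poly intr (chebT d)).[x].

Definition periodic (T : Type) (f : T -> T) (z : T) : Prop :=
  exists n : nat, (0 < n)%N /\ iter n f z = z.

Lemma chebT_defining_sanity : chebT 2 = 'X^2 - 2%:P.
Proof. rewrite /chebT /=. rewrite -expr2. by []. Qed.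

(* Main.v *)
Require Import Defs.
From mathcomp Require Import all_boot all_order all_algebra.
From mathcomp Require Import ring zify.
Import GRing.Theory.
Local Open Scope ring_scope.

Lemma chebT_SS n : chebT n.+2 = 'X * chebT n.+1 - chebT n.
Proof. by rewrite /chebT /=; case: (cheb_pair n). Qed.

Section C.
Variable R : comNzRingType.
Notation t := (@chebMap R).
Lemma t0 x : t 0 x = 2.
Proof. by rewrite /chebMap /chebT /= map_polyC hornerC. Qed.
Lemma t1 x : t 1 x = x.
Proof. by rewrite /chebMap /chebT /= map_polyX hornerX. Qed.
Lemma tSS n x : t n.+2 x = x * t n.+1 x - t n x.
Proof. rewrite /chebMap chebT_SS rmorphB /=. rewrite rmorphM /=. rewrite map_polyX. rewrite !hornerE. done. Qed.
Lemma tS1 n x : x * t n.+1 x = t n.+2 x + t n x.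
Proof. by rewrite tSS addrNK. Qed.

Lemma tprod y k0 : forall i, t (i + k0) y * t k0 y = t (i + k0.*2) y + t i y.
Proof.
have H : forall k, (forall i, t (i + k) y * t k y = t (i + k.*2) y + t i y) /\
                   (forall i, t (i + k.+1) y * t k.+1 y = t (i + k.+1.*2) y + t i y).
  elim=> [|k [IH1 IH2]].
    split=> i; first by rewrite addn0 t0 mulr2n mulrDr mulr1.
    by rewrite addn1 t1 mulrC tS1 -addn2.
  split=> // i.
  rewrite tSS mulrBr mulrCA.
  have E2 : (i + k.+2 = i.+2 + k)%N by rewrite !addnS !addSn.
  have E1 : (i + k.+2 = i.+1 + k.+1)%N by rewrite !addnS addSn.
  rewrite [in X in _ - X]E2 E1 IH2.
  rewrite IH1 mulrDr.
  have E3 : (i.+1 + k.+1.*2 = (i + k.*2).+3)%N by rewrite !doubleS !addnS addSn.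
  rewrite E3 tS1 tS1.
  have E4 : (i.+2 + k.*2 = (i + k.*2).+2)%N by rewrite !addSn.
  have E5 : (i + k.+2.*2 = (i + k.*2).+4)%N by rewrite !doubleS !addnS.
  rewrite E4 E5. by ring.
by case: (H k0).
Qed.

Lemma tcomp m0 n x : t m0 (t n x) = t (m0 * n) x.
Proof.
have H : forall m, t m (t n x) = t (m * n) x /\ t m.+1 (t n x) = t (m.+1 * n) x.
  elim=> [|m [IH1 IH2]]; first by rewrite mul0n mul1n !t0 t1.
  split=> //. rewrite tSS IH1 IH2 mulrC.
  have -> : (m.+2 * n = m * n + n.*2)%N by rewrite -addnn; lia.
  have -> : (m.+1 * n = m * n + n)%N by lia.
  rewrite tprod.
  by rewrite addrK.
by case: (H m0).
Qed.
End C.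

Section It.
Variable T : finType.
Variables f g : T -> T.
Hypothesis fg : forall x, f (g x) = g (f x).

Lemma iter_comm k m x : iter k f (iter m g x) = iter m g (iter k f x).
Proof.
have H1 : forall m x, f (iter m g x) = iter m g (f x).
  by elim=> [|m' IH] y //=; rewrite fg IH.
by elim: k => [|k IH] //=; rewrite IH H1.
Qed.

Lemma iter_compose n x : iter n (fun y => f (g y)) x = iter n f (iter n g x).
Proof.
elim: n => [|n IH] //=. rewrite IH. congr (f _).
by have := iter_comm n 1 (iter n g x).
Qed.

Lemma iter_mul_fix (h : T -> T) n z : iter n h z = z -> forall k, iter (n * k) h z = z.
Proof. by move=> H; elim=> [|k IH]; rewrite ?muln0 // mulnS iterD IH. Qed.

Lemma per_comp z : periodic (fun y => f (g y)) z -> periodic f z.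
Proof.
case=> n [n0 Hn].
have : ~~ injectiveb (fun k : 'I_#|T|.+1 => iter k f z).
  by apply/negP => /injectiveP /leq_card; rewrite card_ord ltnn.
case/injectivePn => i [j neq E].
wlog lt : i j neq E / (i < j)%N.
  move=> W; case: (ltngtP i j) => [l|l|e]; first exact: (W i j).
    by apply: (W j i); rewrite // eq_sym.
  by move: neq; rewrite (val_inj e) eqxx.
exists (j - i)%N; split; first by rewrite subn_gt0.
set N := (n * i)%N.
have HN : iter N f (iter N g z) = z by rewrite -iter_compose /N iter_mul_fix.
have iN : (i <= N)%N by rewrite /N leq_pmull.
have := congr1 (fun w => iter (N - i) f (iter N g w)) E => /=.
rewrite !iter_comm -!iterD.
have -> : (N - i + j = (j - i) + N)%N by lia.
rewrite subnK // -iter_comm HN iterD -(iter_comm (j - i) N) -(iter_comm N N) HN.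
by move=> <-.
Qed.
End It.

Theorem mainTheorem4 (p : nat) (a b : nat) (z : 'F_p) :
  prime p -> (0 < a)%N -> (0 < b)%N ->
  (periodic (fun x => chebMap a (chebMap b x)) z <->
   (periodic (chebMap a) z /\ periodic (chebMap b) z)).
Proof.
move=> _ _ _.
have C : forall x : 'F_p, chebMap a (chebMap b x) = chebMap b (chebMap a x).
  by move=> x; rewrite !tcomp mulnC.
split.
  move=> P; split; first exact: (@per_comp _ _ _ C z).
  apply: (@per_comp _ (chebMap b) (chebMap a) (fun x => esym (C x)) z).
  by case: P => n [n0 Hn]; exists n; split=> //; rewrite -[RHS]Hn; apply: eq_iter => x; rewrite C.
case=> [[m [m0 Hm]] [n [n0 Hn]]].
exists (m * n)%N; split; first by rewrite muln_gt0 m0.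
rewrite (@iter_compose _ _ _ C) {2}mulnC (@iter_mul_fix _ _ _ _ Hn).
by rewrite (@iter_mul_fix _ _ _ _ Hm).
Qed.
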